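(* If $s_1,s_2\in\mathcal F(M,g^M,E,h^E)$ and $t_1,t_2>0$ are real numbers, then $t_1s_1+t_2s_2\in\mathcal F(M,g^M,E,h^E)$. In particular $\mathcal F(M,g^M,E,h^E)$ is a convex cone.
   Context: $G$ is a compact Lie group with Lie algebra $\mathfrak g$; a $G$-invariant inner product on $\mathfrak g^*$ is fixed, inducing an isomorphism $\psi:\mathfrak g^*\to\mathfrak g$ and norms $|\cdot|$. For $u\in\mathfrak g$ let $u_M(x)=\frac{d}{dt}|_{t=0}\exp(tu)\cdot x$. $(M,g^M)$ is a complete complex manifold without boundary of complex dimension $n$, with complex structure $J$ orthogonal for $g^M$, on which $G$ acts holomorphically and isometrically. It is a tamed asymptotically Kähler $G$-manifold: there is a $G$-invariant compact $K\subset M$ such that $g^M$ is Kähler on $M\setminus K$ with Kähler form $\omega$, the action on $M\setminus K$ is Hamiltonian with moment map $\mu:M\setminus K\to\mathfrak g^*$ (i.e. $d\langle\mu,u\rangle=\iota_{u_M}\omega$), $\mu$ is proper, and the vector field $-J\nabla(|\mu|^2/2)$ vanishes nowhere outside some compact set. Fix a smooth $G$-equivariant extension $\tilde\mu:M\to\mathfrak g^*$ of $\mu$ and set $\mathbf v(x)=\psi(\tilde\mu(x))$, $v=-J\nabla(|\tilde\mu|^2/2)$. $E$ is a $G$-equivariant holomorphic vector bundle over $M$ with a $G$-invariant Hermitian metric $h^E$ and $G$-invariant holomorphic Hermitian connection $\nabla^E$. Let $\mathcal E=E\otimes\Lambda^\bullet(T^{0,1}M)^*$ with connection $\nabla^{\mathcal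 E}=\nabla^E\otimes1+1\otimes\nabla^{LC}$. For $u\in\mathfrak g$ let $\mu^{\mathcal E}(u)=\nabla^{\mathcal E}_{u_M}-\mathcal L^{\mathcal E}_u\in\mathrm{End}(\mathcal E)$, $\mathcal L^{\mathcal E}_u$ the infinitesimal action. Set $\nu=|\mathbf v|+\|\nabla^{LC}v\|+\|\mu^{\mathcal E}(\mathbf v)\|+|v|+1$. A smooth $s:[0,\infty)\to[0,\infty)$ is admissible for $(M,g^M,E,h^E)$ if $s'>0$ and $f(x):=s'(|\tilde\mu(x)|^2/2)$ satisfies $\lim_{x\to\infty}\frac{f^2|v|^2}{|df|\,|v|+f\nu+1}=\infty$ ($x$ leaving every compact set). $\mathcal F(M,g^M,E,h^E)$ is the set of admissible functions. *)

(* Defs.v *)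
From HB Require Import structures.
From mathcomp Require Import all_boot all_order all_algebra.
From mathcomp Require Import all_classical all_reals all_analysis.
Set Implicit Arguments. Unset Strict Implicit. Unset Printing Implicit Defensive.
Import Order.TTheory GRing.Theory Num.Theory.
Import numFieldNormedType.Exports.
Local Open Scope classical_set_scope.
Local Open Scope ring_scope.

(* s : R -> R is smooth: all iterated derivatives exist everywhere.
   (A smooth function on [0,oo) extends to a smooth function on R; only the
   values on [0,oo) are ever used below.) *)
Definition smooth_fun (R : realType) (s : R -> R) : Prop :=
  forall (n : nat) (x : R), derivable (derive1n n s) x 1.

Definition tends_to_pinfty_at_infinity (R : realType) (M : topologicalType)
  (g : M -> R) : Prop :=
  forall A : R, exists K : set M, compact K /\ (forall x, ~ K x -> A < g x).

(* Abstract geometric data on M: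
   mu2  x = |mu~(x)|^2 / 2
   dmu2 x = |d(|mu~|^2/2)|(x)   (pointwise norm of the differential)
   nv   x = |v(x)|
   nu   x = nu(x) = |v_bold| + ||nabla v|| + ||mu^E(v_bold)|| + |v| + 1.
   For f := s'(mu2), df = s''(mu2) d(mu2), hence |df| = |s''(mu2)| * dmu2. *)
Definition admissible (R : realType) (M : topologicalType)
  (mu2 dmu2 nv nu : M -> R) (s : R -> R) : Prop :=
  [/\ smooth_fun s,
      (forall r : R, 0 <= r -> 0 < derive1 s r) &
      tends_to_pinfty_at_infinity
        (fun x : M =>
           let f := derive1 s (mu2 x) in
           let df := `|derive1n 2 s (mu2 x)| * dmu2 x in
           (f ^+ 2 * nv x ^+ 2) / (df * nv x + f * nu x + 1))].

(* Main.v *)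
Require Import Defs.
From HB Require Import structures.
From mathcomp Require Import all_boot all_order all_algebra.
From mathcomp Require Import all_classical all_reals all_analysis.
Import Order.TTheory GRing.Theory Num.Theory.
Import numFieldNormedType.Exports.
Local Open Scope ring_scope.
From mathcomp Require Import lra ring.
Lemma dlin {R : realType} (g1 g2 : R -> R) t1 t2 x
  (H1 : derivable g1 x 1) (H2 : derivable g2 x 1) :
  is_derive x 1 (fun r => t1 * g1 r + t2 * g2 r) (t1 * derive1 g1 x + t2 * derive1 g2 x).
Proof.
have D1 := derivableP H1. have D2 := derivableP H2.
rewrite !derive1E.
apply: is_deriveD.


Qed.
Lemma dn {R : realType} (g1 g2 : R -> R) t1 t2
  (H1 : forall n x, derivable (derive1n n g1) x 1)
  (H2 : forall n x, derivable (derive1n n g2) x 1) n :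
  derive1n n (fun r => t1 * g1 r + t2 * g2 r) =
  (fun r => t1 * derive1n n g1 r + t2 * derive1n n g2 r).
Proof.
elim: n => [//|n IH].
rewrite /derive1n !iterS -/(derive1n n _) -/(derive1n n g1) -/(derive1n n g2) IH.
apply/funext => x.
rewrite derive1E. have D := dlin _ _ t1 t2 x (H1 n x) (H2 n x). by rewrite derive_val.
Qed.
Lemma scale1 {R : realType} (t f g w n : R) : 0<t -> 0<f -> 0<=g -> 0<=w -> 1<=n ->
 Num.min t (t^+2) * (f^+2*w^+2/(g*w+f*n+1)) <= (t*f)^+2*w^+2/((t*g)*w+(t*f)*n+1).
Proof.
move=> t0 f0 g0 w0 n1.
have gw : 0 <= g*w by apply: mulr_ge0.
have fn : 0 <= f*n by apply: mulr_ge0; lra.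
have D0 : 0 < g*w+f*n+1 by lra.
have D0' : 0 < (t*g)*w+(t*f)*n+1.
  have -> : (t*g)*w+(t*f)*n+1 = t*(g*w+f*n) + 1 by ring.
  have := mulr_ge0 (ltW t0) (addr_ge0 gw fn). lra.
set u := f^+2*w^+2/(g*w+f*n+1).
have u0 : 0 <= u by apply: divr_ge0; [apply: mulr_ge0; apply: sqr_ge0| exact: ltW].
have Pu : f^+2*w^+2 = u * (g*w+f*n+1) by rewrite /u divfK // gt_eqF.
set c := Num.min t (t^+2).
have c1 : c <= t by rewrite ge_min lexx.
have c2 : c <= t^+2 by rewrite ge_min lexx orbT.
have c0 : 0 <= c by rewrite le_min ltW //= sqr_ge0.
have -> : (t*f)^+2*w^+2 = t^+2*(f^+2*w^+2) by ring.
rewrite ler_pdivlMr // Pu.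
have H : c * ((t*g)*w+(t*f)*n+1) <= t^+2 * (g*w+f*n+1).
  have -> : (t*g)*w+(t*f)*n+1 = t*(g*w+f*n) + 1 by ring.
  have ct : c*t <= t^+2 by rewrite expr2; apply: ler_wpM2r; [exact: ltW|].
  have X0 : 0 <= g*w+f*n by lra.
  have ct' : 0 <= t^+2 - c*t by rewrite subr_ge0.
  have := mulr_ge0 ct' X0.
  have -> : (t ^+ 2 - c * t) * (g * w + f * n) = t^+2*(g*w+f*n) - c*(t*(g*w+f*n)) by ring.
  lra.
have := ler_wpM2l u0 H. nra.
Qed.

Lemma core {R : realType} (a b g G1 G2 w n : R) : 0<a -> 0<b -> 0<=G1 -> 0<=G2 -> 0<=w -> 1<=n ->
  0 <= g -> g <= G1+G2 ->
  Num.min (a^+2*w^+2/(G1*w+a*n+1)) (b^+2*w^+2/(G2*w+b*n+1)) <= (a+b)^+2*w^+2/(g*w+(a+b)*n+1).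
Proof.
move=> a0 b0 G10 G20 w0 n1 g0 gG.
have g1w : 0 <= G1*w by apply: mulr_ge0.
have g2w : 0 <= G2*w by apply: mulr_ge0.
have gw : 0 <= g*w by apply: mulr_ge0.
have gwl : g*w <= G1*w + G2*w by rewrite -mulrDl; apply: ler_wpM2r.
have an : 0 <= a*n by apply: mulr_ge0; lra.
have bn : 0 <= b*n by apply: mulr_ge0; lra.
have D1 : 0 < G1*w+a*n+1 by lra.
have D2 : 0 < G2*w+b*n+1 by lra.
have D0 : 0 < g*w+(a+b)*n+1 by rewrite mulrDl; lra.
set u1 := a^+2*w^+2/(G1*w+a*n+1).
set u2 := b^+2*w^+2/(G2*w+b*n+1).
have P1 : a^+2*w^+2 = u1 * (G1*w+a*n+1) by rewrite /u1 divfK // gt_eqF.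
have P2 : b^+2*w^+2 = u2 * (G2*w+b*n+1) by rewrite /u2 divfK // gt_eqF.
have u10 : 0 <= u1 by apply: divr_ge0; [apply: mulr_ge0; apply: sqr_ge0| exact: ltW].
have u20 : 0 <= u2 by apply: divr_ge0; [apply: mulr_ge0; apply: sqr_ge0| exact: ltW].
set m := Num.min u1 u2.
have m1 : m <= u1 by rewrite ge_min lexx.
have m2 : m <= u2 by rewrite ge_min lexx orbT.
have m0 : 0 <= m by rewrite le_min u10 u20.
rewrite ler_pdivlMr //.
have ww : 0 <= w^+2 by apply: sqr_ge0.
have ab : a^+2*w^+2 + b^+2*w^+2 <= (a+b)^+2*w^+2.
  rewrite -mulrDl; apply: ler_wpM2r => //. have := mulr_ge0 (ltW a0) (ltW b0). rewrite sqrrD. lra.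
have q1 : m * (G1*w+a*n+1) <= a^+2*w^+2 by rewrite P1; apply: ler_wpM2r => //; exact: ltW.
have q2 : m * (G2*w+b*n+1) <= b^+2*w^+2 by rewrite P2; apply: ler_wpM2r => //; exact: ltW.
have : m * (g*w+(a+b)*n+1) <= m * ((G1*w+a*n+1) + (G2*w+b*n+1)).
  apply: ler_wpM2l => //. rewrite mulrDl; lra.
lra.
Qed.

Lemma final {R : realType} (A c t1 t2 f1 f2 h1 h2 w n d : R) :
 c = Num.min (Num.min t1 (t1^+2)) (Num.min t2 (t2^+2)) -> 0 < t1 -> 0 < t2 ->
 0 < f1 -> 0 < f2 -> 0 <= w -> 1 <= n -> 0 <= d ->
 A / c < f1 ^+ 2 * w ^+ 2 / (`|h1| * d * w + f1 * n + 1) ->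
 A / c < f2 ^+ 2 * w ^+ 2 / (`|h2| * d * w + f2 * n + 1) ->
 A < (t1 * f1 + t2 * f2) ^+ 2 * w ^+ 2 /
  (`|t1 * h1 + t2 * h2| * d * w + (t1 * f1 + t2 * f2) * n + 1).
Proof.
move=> ce t10 t20 f10 f20 w0 n1 d0 Q1 Q2.
have c0 : 0 < c by rewrite ce !lt_min t10 t20 !exprn_gt0.
have S1 := scale1 _ _ _ _ _ t10 f10 (mulr_ge0 (normr_ge0 h1) d0) w0 n1.
have S2 := scale1 _ _ _ _ _ t20 f20 (mulr_ge0 (normr_ge0 h2) d0) w0 n1.
have G1 : 0 <= t1 * (`|h1| * d) by apply: mulr_ge0; [exact: ltW|apply: mulr_ge0].
have G2 : 0 <= t2 * (`|h2| * d) by apply: mulr_ge0; [exact: ltW|apply: mulr_ge0].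
have gG : `|t1 * h1 + t2 * h2| * d <= t1 * (`|h1| * d) + t2 * (`|h2| * d).
  rewrite !mulrA -mulrDl; apply: ler_wpM2r => //.
  apply: (le_trans (ler_normD _ _)).
  by rewrite !normrM (gtr0_norm t10) (gtr0_norm t20).
have C := core _ _ _ _ _ _ _ (mulr_gt0 t10 f10) (mulr_gt0 t20 f20) G1 G2 w0 n1
   (mulr_ge0 (normr_ge0 (t1 * h1 + t2 * h2)) d0) gG.
apply: (lt_le_trans _ C).
move: S1 S2.
set q1 := f1 ^+ 2 * w ^+ 2 / (`|h1| * d * w + f1 * n + 1).
set q2 := f2 ^+ 2 * w ^+ 2 / (`|h2| * d * w + f2 * n + 1).
move=> S1 S2.
have q10 : 0 <= q1.
  apply: divr_ge0; first by apply: mulr_ge0; apply: sqr_ge0.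
  have := mulr_ge0 (mulr_ge0 (normr_ge0 h1) d0) w0. have : 0 <= f1 * n by apply: mulr_ge0; lra. lra.
have q20 : 0 <= q2.
  apply: divr_ge0; first by apply: mulr_ge0; apply: sqr_ge0.
  have := mulr_ge0 (mulr_ge0 (normr_ge0 h2) d0) w0. have : 0 <= f2 * n by apply: mulr_ge0; lra. lra.
have k1 : c <= Num.min t1 (t1^+2) by rewrite ce ge_min lexx.
have k2 : c <= Num.min t2 (t2^+2) by rewrite ce ge_min lexx orbT.
have A1 : A < c * q1.
  by rewrite mulrC -ltr_pdivrMr.
have A2 : A < c * q2.
  by rewrite mulrC -ltr_pdivrMr.
rewrite lt_min; apply/andP; split.
- apply: (lt_le_trans A1); apply: (le_trans _ S1); exact: ler_wpM2r.
- apply: (lt_le_trans A2); apply: (le_trans _ S2); exact: ler_wpM2r.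
Qed.

Theorem mainTheorem2 (R : realType) (M : topologicalType)
  (mu2 dmu2 nv nu : M -> R)
  (Hmu2 : forall x, 0 <= mu2 x)
  (Hdmu2 : forall x, 0 <= dmu2 x)
  (Hnv : forall x, 0 <= nv x)
  (Hnu : forall x, 1 <= nu x)
  (s1 s2 : R -> R) (t1 t2 : R) :
  0 < t1 -> 0 < t2 ->
  admissible mu2 dmu2 nv nu s1 -> admissible mu2 dmu2 nv nu s2 ->
  admissible mu2 dmu2 nv nu (fun r => t1 * s1 r + t2 * s2 r).
Proof.
move=> t10 t20 [sm1 pos1 T1] [sm2 pos2 T2].
have E := dn _ _ t1 t2 sm1 sm2.
have E1 : derive1 (fun r => t1 * s1 r + t2 * s2 r) =
  (fun r => t1 * derive1 s1 r + t2 * derive1 s2 r) := E 1%N.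
split.
- move=> n x; rewrite E; have D := dlin _ _ t1 t2 x (sm1 n x) (sm2 n x); exact: ex_derive.
- move=> r r0; rewrite E1.
  have := pos1 r r0; have := pos2 r r0.
  move=> p2 p1; apply: addr_gt0; exact: mulr_gt0.
move=> A.
set c := Num.min (Num.min t1 (t1^+2)) (Num.min t2 (t2^+2)).
have c0 : 0 < c by rewrite !lt_min t10 t20 !exprn_gt0.
have [K1 [cK1 HK1]] := T1 (A / c).
have [K2 [cK2 HK2]] := T2 (A / c).
exists (K1 `|` K2)%classic; split; first exact: compactU.
move=> x Kx.
have nK1 : ~ K1 x by move=> k; apply: Kx; left.
have nK2 : ~ K2 x by move=> k; apply: Kx; right.
have Q1 := HK1 x nK1. have Q2 := HK2 x nK2.
have E2 : derive1 (derive1 (fun r => t1 * s1 r + t2 * s2 r)) =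
  (fun r => t1 * derive1 (derive1 s1) r + t2 * derive1 (derive1 s2) r) := E 2%N.
move: Q1 Q2 => /=; rewrite E2 E1.
set f1 := derive1 s1 (mu2 x). set f2 := derive1 s2 (mu2 x).
set h1 := derive1 (derive1 s1) (mu2 x). set h2 := derive1 (derive1 s2) (mu2 x).
have f10 : 0 < f1 by apply: pos1.
have f20 : 0 < f2 by apply: pos2.
set w := nv x. set n := nu x. set d := dmu2 x.
have w0 : 0 <= w := Hnv x. have n1 : 1 <= n := Hnu x. have d0 : 0 <= d := Hdmu2 x.
move=> Q1 Q2.
exact: (final _ _ _ _ _ _ _ _ _ _ _ erefl t10 t20 f10 f20 w0 n1 d0 Q1 Q2).
Qed.
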